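(* Fix weights $w_1,w_2\ge 0$ with $w_1+w_2>0$, a cost type (uniform or proportional) and a game type (simultaneous, symmetric simultaneous, or sequential). Then the optimal value of the linear program described below (with the constraints corresponding to these choices) equals the price of anarchy of the class of two-player weighted congestion games with affine costs, player weights $w_1,w_2$, the given cost type and the given game type. The LP: Let the label set be $\mathcal{L}=\{O_1,E_1,O_2,E_2\}$ for simultaneous games and $\mathcal{L}=\{O_1,E_1,O_2,E_2,F_2\}$ for sequential games. Label sets of the players: simultaneous: $\mathcal{L}_1=\{O_1,E_1\}$, $\mathcal{L}_2=\{O_2,E_2\}$; symmetric simultaneous: $\mathcal{L}_1=\mathcal{L}_2=\{O_1,E_1,O_2,E_2\}$; sequential: $\mathcal{L}_1=\{O_1,E_1\}$, $\mathcal{L}_2=\{O_2,E_2,F_2\}$. Let $R=2^{\mathcal{L}}$. Variables: $\alpha_r,\beta_r$ for $r\in R$ and $C_i(a_1,a_2)$ for $i\in\{1,2\}$, $a_1\in\mathcal{L}_1$, $a_2\in\mathcal{L}_2$. Maximize $C_1(E_1,E_2)+C_2(E_1,E_2)$ subject to: $C_1(O_1,O_2)+C_2(O_1,O_2)=1$; $C_1(a_1,a_2)+C_2(a_1,a_2)\ge 1$ for all $a_1\in\mathcal{L}_1,a_2\in\mathcal{L}_2$; $\alpha_r,\beta_r\ge0$ for all $r\in R$; for all $a_1,a_2$ and $i=1,2$: $C_i(a_1,a_2)=\sum_{r\in R:\, a_i\in r}\bigl(\alpha_r+\beta_r\sum_{j\in\{1,2\}:\, a_j\in r} w_j\bigr)$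 in the uniform case, respectively $C_i(a_1,a_2)=w_i\sum_{r\in R:\, a_i\in r}\bigl(\alpha_r+\beta_r\sum_{j\in\{1,2\}:\, a_j\in r} w_j\bigr)$ in the proportional case; in the (symmetric) simultaneous case additionally $C_1(E_1,E_2)\le C_1(a_1,E_2)$ for all $a_1\in\mathcal{L}_1$ and $C_2(E_1,E_2)\le C_2(E_1,a_2)$ for all $a_2\in\mathcal{L}_2$; in the sequential case additionally $C_2(E_1,E_2)\le C_2(E_1,a_2)$ and $C_2(O_1,F_2)\le C_2(O_1,a_2)$ for all $a_2\in\mathcal{L}_2$, and $C_1(E_1,E_2)\le C_1(O_1,F_2)$.
   Context: A weighted two-player congestion game with affine costs consists of a finite set $R'$ of resources, coefficients $\alpha_r,\beta_r \geq 0$ for each $r\in R'$, two players $i=1,2$ with weights $w_i\ge 0$, and for each player $i$ a nonempty finite set $\mathcal{A}_i \subseteq 2^{R'}$ of actions; it is symmetric if $\mathcal{A}_1=\mathcal{A}_2$. For an action profile $A=(A_1,A_2)$ the load of $r$ is $x_r(A)=\sum_{j:\, r\in A_j} w_j$. With uniform costs player $i$ pays $C_i(A)=\sum_{r\in A_i}(\alpha_r+\beta_r x_r(A))$; with proportional costs $C_i(A)=w_i\sum_{r\in A_i}(\alpha_r+\beta_r x_r(A))$. Social cost $C(A)=C_1(A)+C_2(A)$. In simultaneous games the equilibria are pure Nash equilibria (no player can lower her cost by unilaterally deviating). In sequential games player 1 chooses first and player 2 responds after observing $A_1$; a subgame-perfect equilibrium consists of a function $A_1\mapsto A_2^*(A_1)$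 with $C_2(A_1,A_2^*(A_1))\le C_2(A_1,A_2)$ for all $A_1,A_2$ and an action $A_1^*$ with $C_1(A_1^*,A_2^*(A_1^* ))\le C_1(A_1,A_2^*(A_1))$ for all $A_1$, with outcome $(A_1^*,A_2^*(A_1^* ))$. The price of anarchy of an instance is the maximum over equilibrium outcomes $A$ of $C(A)/\min_{A'}C(A')$, and of a class the supremum over its instances (with positive optimal social cost). *)

(* Defs.v *)
From HB Require Import structures.
From mathcomp Require Import all_boot all_order all_algebra.
From mathcomp Require Import classical_sets reals constructive_ereal ereal.

Set Implicit Arguments.
Unset Strict Implicit.
Unset Printing Implicit Defensive.
Import Order.TTheory GRing.Theory Num.Theory.
Local Open Scope classical_set_scope.
Local Open Scope ring_scope.

Inductive cost_type := Uniform | Proportional.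
Inductive game_type := Simultaneous | SymSimultaneous | Sequential.

Definition scale_cost (R : realType) (ct : cost_type) (wi s : R) : R :=
  match ct with Uniform => s | Proportional => wi * s end.

(* Resources: 'I_n (any finite resource set is in bijection with one). *)
Section Games.
Variables (R : realType) (ct : cost_type) (w1 w2 : R) (n : nat)
          (alpha beta : 'I_n -> R).

Definition load (A1 A2 : {set 'I_n}) (r : 'I_n) : R :=
  (if r \in A1 then w1 else 0) + (if r \in A2 then w2 else 0).

Definition res_sum (Ai A1 A2 : {set 'I_n}) : R :=
  \sum_(r in Ai) (alpha r + beta r * load A1 A2 r).

Definition cost1 (A1 A2 : {set 'I_n}) : R := scale_cost ct w1 (res_sum A1 A1 A2).
Definition cost2 (A1 A2 : {set 'I_n}) : R := scale_cost ct w2 (res_sum A2 A1 A2).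
Definition social_cost (A1 A2 : {set 'I_n}) : R := cost1 A1 A2 + cost2 A1 A2.

Definition is_PNE (S1 S2 : {set {set 'I_n}}) (A1 A2 : {set 'I_n}) : Prop :=
  [/\ A1 \in S1, A2 \in S2,
      (forall B1, B1 \in S1 -> cost1 A1 A2 <= cost1 B1 A2) &
      (forall B2, B2 \in S2 -> cost2 A1 A2 <= cost2 A1 B2)].

Definition is_SPE_outcome (S1 S2 : {set {set 'I_n}}) (A1 A2 : {set 'I_n}) : Prop :=
  exists f : {set 'I_n} -> {set 'I_n},
    [/\ (forall B1, B1 \in S1 -> f B1 \in S2),
        (forall B1 B2, B1 \in S1 -> B2 \in S2 -> cost2 B1 (f B1) <= cost2 B1 B2),
        A1 \in S1,
        (forall B1, B1 \in S1 -> cost1 A1 (f A1) <= cost1 B1 (f B1)) &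
        A2 = f A1].

Definition is_eq_outcome (gt : game_type) S1 S2 A1 A2 : Prop :=
  match gt with
  | Sequential => is_SPE_outcome S1 S2 A1 A2
  | _ => is_PNE S1 S2 A1 A2
  end.

Definition valid_instance (gt : game_type) (S1 S2 : {set {set 'I_n}}) : Prop :=
  [/\ (forall r, 0 <= alpha r /\ 0 <= beta r),
      (exists B1, B1 \in S1), (exists B2, B2 \in S2) &
      (match gt with SymSimultaneous => S1 = S2 | _ => True end)].

End Games.

Definition PoA_class (R : realType) (w1 w2 : R) (ct : cost_type)
    (gt : game_type) : \bar R :=
  ereal_sup [set x : \bar R | exists (n : nat) (alpha beta : 'I_n -> R)
      (S1 S2 : {set {set 'I_n}}) (A1 A2 O1 O2 : {set 'I_n}),
      [/\ valid_instance alpha beta gt S1 S2,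
          is_eq_outcome ct w1 w2 alpha beta gt S1 S2 A1 A2,
          O1 \in S1 /\ O2 \in S2,
          ((forall B1 B2, B1 \in S1 -> B2 \in S2 ->
             social_cost ct w1 w2 alpha beta O1 O2
               <= social_cost ct w1 w2 alpha beta B1 B2) /\
           0 < social_cost ct w1 w2 alpha beta O1 O2) &
          x = (social_cost ct w1 w2 alpha beta A1 A2
                / social_cost ct w1 w2 alpha beta O1 O2)%:E]].

Definition label := 'I_5.
Definition lO1 : label := @Ordinal 5 0 isT.
Definition lE1 : label := @Ordinal 5 1 isT.
Definition lO2 : label := @Ordinal 5 2 isT.
Definition lE2 : label := @Ordinal 5 3 isT.
Definition lF2 : label := @Ordinal 5 4 isT.

Definition labels (gt : game_type) : {set label} :=
  match gt with
  | Sequential => [set lO1; lE1; lO2; lE2; lF2]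
  | _ => [set lO1; lE1; lO2; lE2]
  end.

Definition labels1 (gt : game_type) : {set label} :=
  match gt with
  | SymSimultaneous => [set lO1; lE1; lO2; lE2]
  | _ => [set lO1; lE1]
  end.

Definition labels2 (gt : game_type) : {set label} :=
  match gt with
  | Simultaneous => [set lO2; lE2]
  | SymSimultaneous => [set lO1; lE1; lO2; lE2]
  | Sequential => [set lO2; lE2; lF2]
  end.

Definition lp_resources (gt : game_type) : {set {set label}} :=
  powerset (labels gt).

Section LP.
Variables (R : realType) (w1 w2 : R) (ct : cost_type) (gt : game_type).

Definition lp_sum (al be : {set label} -> R) (a a1 a2 : label) : R :=
  \sum_(r in lp_resources gt | a \in r)
     (al r + be r * ((if a1 \in r then w1 else 0) + (if a2 \in r then w2 else 0))).

Definition lp_eq_constraints (c1 c2 : label -> label -> R) : Prop :=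
  match gt with
  | Sequential =>
      [/\ (forall a2, a2 \in labels2 gt -> c2 lE1 lE2 <= c2 lE1 a2),
          (forall a2, a2 \in labels2 gt -> c2 lO1 lF2 <= c2 lO1 a2) &
          c1 lE1 lE2 <= c1 lO1 lF2]
  | _ =>
      (forall a1, a1 \in labels1 gt -> c1 lE1 lE2 <= c1 a1 lE2) /\
      (forall a2, a2 \in labels2 gt -> c2 lE1 lE2 <= c2 lE1 a2)
  end.

Definition lp_feasible (al be : {set label} -> R) (c1 c2 : label -> label -> R)
    : Prop :=
  [/\ c1 lO1 lO2 + c2 lO1 lO2 = 1,
      (forall a1 a2, a1 \in labels1 gt -> a2 \in labels2 gt ->
         1 <= c1 a1 a2 + c2 a1 a2),
      (forall r, r \in lp_resources gt -> 0 <= al r /\ 0 <= be r),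
      (forall a1 a2, a1 \in labels1 gt -> a2 \in labels2 gt ->
         c1 a1 a2 = scale_cost ct w1 (lp_sum al be a1 a1 a2) /\
         c2 a1 a2 = scale_cost ct w2 (lp_sum al be a2 a1 a2)) &
      lp_eq_constraints c1 c2].

Definition lp_value : \bar R :=
  ereal_sup [set x : \bar R | exists (al be : {set label} -> R)
      (c1 c2 : label -> label -> R),
      lp_feasible al be c1 c2 /\ x = (c1 lE1 lE2 + c2 lE1 lE2)%:E].

End LP.

(* Main.v *)
Require Import Defs.
From mathcomp Require Import all_boot all_order all_algebra.
From mathcomp Require Import classical_sets reals constructive_ereal ereal.
Import Order.TTheory GRing.Theory Num.Theory.
Local Open Scope ring_scope.
Set Implicit Arguments. Unset Strict Implicit. Unset Printing Implicit Defensive.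

Definition labof (gt : game_type) n (act : label -> {set 'I_n}) (i : 'I_n) : {set label} :=
  [set a in labels gt | i \in act a].

Definition aggr (R : realType) (gt : game_type) n (act : label -> {set 'I_n})
  (f : 'I_n -> R) (K : R) (S : {set label}) : R :=
  (\sum_(i | labof gt act i == S) f i) / K.

Lemma lp_sum_aggr (R : realType) (w1 w2 : R) gt n (alpha beta : 'I_n -> R)
  (act : label -> {set 'I_n}) (K : R) a a1 a2 :
  a \in labels gt -> a1 \in labels gt -> a2 \in labels gt ->
  lp_sum w1 w2 gt (aggr gt act alpha K) (aggr gt act beta K) a a1 a2 =
  res_sum w1 w2 alpha beta (act a) (act a1) (act a2) / K.
Proof.
move=> ha ha1 ha2.
rewrite /res_sum /lp_sum /lp_resources.
rewrite (partition_big (labof gt act) (fun S => (S \in powerset (labels gt)) && (a \in S))); last first.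
  move=> i hi; rewrite powersetE /labof; apply/andP; split.
    by apply/fintype.subsetP => x; rewrite inE => /andP[].
  by rewrite inE ha.
rewrite mulr_suml; apply: eq_bigr => S /andP[_ haS].
rewrite (eq_bigl (fun i => labof gt act i == S)); last first.
  move=> i; apply/idP/idP => [/andP[_ ->] // | h]; rewrite h andbT.
  by move/eqP: h haS => <-; rewrite /labof inE => /andP[].
have hL : forall i, labof gt act i == S -> load w1 w2 (act a1) (act a2) i =
   ((if a1 \in S then w1 else 0) + (if a2 \in S then w2 else 0)).
  move=> i /eqP <-; rewrite /load /labof !inE ha1 ha2 //.
rewrite (eq_bigr (fun i => alpha i + beta i * ((if a1 \in S then w1 else 0) + (if a2 \in S then w2 else 0)))); last first.
  by move=> i /hL ->.
rewrite big_split /= -mulr_suml /aggr.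
by rewrite mulrDl mulrAC.
Qed.
Definition NL := #|{set label}|.
Definition ev (i : 'I_NL) : {set label} := enum_val i.
Definition liftc (R : realType) gt (f : {set label} -> R) (i : 'I_NL) : R :=
  if ev i \in lp_resources gt then f (ev i) else 0.
Definition actG (a : label) : {set 'I_NL} := [set i | a \in ev i].

Lemma res_sum_lift (R : realType) (w1 w2 : R) gt al be a a1 a2 :
  res_sum w1 w2 (liftc gt al) (liftc gt be) (actG a) (actG a1) (actG a2) =
  lp_sum w1 w2 gt al be a a1 a2.
Proof.
rewrite /res_sum /lp_sum big_mkcondl /=.
rewrite (reindex (@enum_rank _)); last by apply: onW_bij; apply: enum_rank_bij.
apply: eq_big => [r|r _]; first by rewrite /actG inE /ev enum_rankK.
rewrite /liftc /load /actG !inE /ev enum_rankK.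
by case: ifP => _; rewrite ?mul0r ?addr0.
Qed.

Ltac labcase := case=> [[|[|[|[|[|?]]]]] ?]; rewrite !inE //.

Lemma labels1_sub gt : forall a, a \in labels1 gt -> a \in labels gt.
Proof. by case: gt; labcase. Qed.
Lemma labels2_sub gt : forall a, a \in labels2 gt -> a \in labels gt.
Proof. by case: gt; labcase. Qed.

Lemma scale_div (R : realType) ct (w x K : R) : scale_cost ct w (x / K) = scale_cost ct w x / K.
Proof. by case: ct => //=; rewrite mulrA. Qed.

Lemma B_main (R : realType) (w1 w2 : R) ct gt n (alpha beta : 'I_n -> R)
  (act : label -> {set 'I_n}) (S1 S2 : {set {set 'I_n}}) :
  (forall r, 0 <= alpha r /\ 0 <= beta r) ->
  (forall a, a \in labels1 gt -> act a \in S1) ->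
  (forall a, a \in labels2 gt -> act a \in S2) ->
  (forall B1 B2, B1 \in S1 -> B2 \in S2 ->
     social_cost ct w1 w2 alpha beta (act lO1) (act lO2) <= social_cost ct w1 w2 alpha beta B1 B2) ->
  0 < social_cost ct w1 w2 alpha beta (act lO1) (act lO2) ->
  lp_eq_constraints gt (fun a1 a2 => cost1 ct w1 w2 alpha beta (act a1) (act a2))
                       (fun a1 a2 => cost2 ct w1 w2 alpha beta (act a1) (act a2)) ->
  exists al be c1 c2, lp_feasible w1 w2 ct gt al be c1 c2 /\
    (social_cost ct w1 w2 alpha beta (act lE1) (act lE2)
       / social_cost ct w1 w2 alpha beta (act lO1) (act lO2))%:E = (c1 lE1 lE2 + c2 lE1 lE2)%:E.
Proof.
set K := social_cost _ _ _ _ _ (act lO1) (act lO2).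
move=> hab h1 h2 hopt hK heq.
exists (aggr gt act alpha K), (aggr gt act beta K),
  (fun a1 a2 => cost1 ct w1 w2 alpha beta (act a1) (act a2) / K),
  (fun a1 a2 => cost2 ct w1 w2 alpha beta (act a1) (act a2) / K).
split; last by rewrite /social_cost mulrDl.
have hKi : 0 <= K^-1 by rewrite invr_ge0 ltW.
split.
- by rewrite -mulrDl divff // gt_eqF.
- move=> a1 a2 ha1 ha2; rewrite -mulrDl ler_pdivlMr // mul1r.
  exact: hopt (h1 _ ha1) (h2 _ ha2).
- move=> r _; rewrite /aggr; split; apply: divr_ge0; try exact: ltW.
  + by apply: sumr_ge0 => i _; case: (hab i).
  + by apply: sumr_ge0 => i _; case: (hab i).
- move=> a1 a2 ha1 ha2; have l1 := labels1_sub ha1; have l2 := labels2_sub ha2.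
  by rewrite /cost1 /cost2 !lp_sum_aggr // !scale_div.
- move: heq; case: gt h1 h2 => h1 h2 /=.
  + by case=> [e1 e2]; split => a h; apply: ler_wpM2r => //; [apply: e1 h | apply: e2 h].
  + by case=> [e1 e2]; split => a h; apply: ler_wpM2r => //; [apply: e1 h | apply: e2 h].
  + case=> [e1 e2 e3]; split; try (move=> a h); apply: ler_wpM2r => //.
    * exact: e1 h.
    * exact: e2 h.
Qed.

Lemma actG_inj a b : actG a = actG b -> a = b.
Proof.
move=> e; have : enum_rank [set a] \in actG a by rewrite /actG inE /ev enum_rankK set11.
by rewrite e /actG inE /ev enum_rankK inE => /eqP.
Qed.

Lemma mem_lab gt : [/\ lO1 \in labels1 gt, lE1 \in labels1 gt, lO2 \in labels2 gt & lE2 \in labels2 gt].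
Proof. by case: gt; rewrite !inE. Qed.

Lemma A_main (R : realType) (w1 w2 : R) ct gt al be c1 c2 :
  lp_feasible w1 w2 ct gt al be c1 c2 ->
  exists (n : nat) (alpha beta : 'I_n -> R)
      (S1 S2 : {set {set 'I_n}}) (A1 A2 O1 O2 : {set 'I_n}),
      [/\ valid_instance alpha beta gt S1 S2,
          is_eq_outcome ct w1 w2 alpha beta gt S1 S2 A1 A2,
          O1 \in S1 /\ O2 \in S2,
          ((forall B1 B2, B1 \in S1 -> B2 \in S2 ->
             social_cost ct w1 w2 alpha beta O1 O2
               <= social_cost ct w1 w2 alpha beta B1 B2) /\
           0 < social_cost ct w1 w2 alpha beta O1 O2) &
          (c1 lE1 lE2 + c2 lE1 lE2)%:E = (social_cost ct w1 w2 alpha beta A1 A2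
                / social_cost ct w1 w2 alpha beta O1 O2)%:E].
Proof.
case=> hO hge hab hc heq.
have [mO1 mE1 mO2 mE2] := mem_lab gt.
have hc1 : forall a1 a2, a1 \in labels1 gt -> a2 \in labels2 gt ->
  cost1 ct w1 w2 (liftc gt al) (liftc gt be) (actG a1) (actG a2) = c1 a1 a2.
  by move=> a1 a2 h1 h2; rewrite /cost1 res_sum_lift; case: (hc _ _ h1 h2).
have hc2 : forall a1 a2, a1 \in labels1 gt -> a2 \in labels2 gt ->
  cost2 ct w1 w2 (liftc gt al) (liftc gt be) (actG a1) (actG a2) = c2 a1 a2.
  by move=> a1 a2 h1 h2; rewrite /cost2 res_sum_lift; case: (hc _ _ h1 h2).
have hs : forall a1 a2, a1 \in labels1 gt -> a2 \in labels2 gt ->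
  social_cost ct w1 w2 (liftc gt al) (liftc gt be) (actG a1) (actG a2) = c1 a1 a2 + c2 a1 a2.
  by move=> a1 a2 h1 h2; rewrite /social_cost hc1 // hc2.
exists NL, (liftc gt al), (liftc gt be),
  [set actG a | a in labels1 gt], [set actG a | a in labels2 gt],
  (actG lE1), (actG lE2), (actG lO1), (actG lO2).
split.
- split.
  + move=> r; rewrite /liftc; case: ifP => h; last by rewrite lexx.
    exact: hab.
  + by exists (actG lO1); apply: imset_f.
  + by exists (actG lO2); apply: imset_f.
  + by case: gt hO hge hab hc heq mO1 mE1 mO2 mE2 hc1 hc2 hs.
- move: heq; rewrite /lp_eq_constraints /is_eq_outcome.
  case: gt hO hge hab hc mO1 mE1 mO2 mE2 hc1 hc2 hs => hO hge hab hc mO1 mE1 mO2 mE2 hc1 hc2 hs.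
  + case=> e1 e2; split; try apply: imset_f => //.
    * by move=> B /imsetP[b hb ->]; rewrite !hc1 //; apply: e1.
    * by move=> B /imsetP[b hb ->]; rewrite !hc2 //; apply: e2.
  + case=> e1 e2; split; try apply: imset_f => //.
    * by move=> B /imsetP[b hb ->]; rewrite !hc1 //; apply: e1.
    * by move=> B /imsetP[b hb ->]; rewrite !hc2 //; apply: e2.
  + case=> e1 e2 e3.
    have mF2 : lF2 \in labels2 Sequential by rewrite !inE.
    have nE : actG lE1 == actG lO1 = false.
      by apply/negbTE/eqP => /actG_inj.
    exists (fun B => if B == actG lO1 then actG lF2 else actG lE2); split.
    * by move=> B _; case: ifP => _; apply: imset_f.
    * move=> B1 B2 /imsetP[b1 hb1 ->] /imsetP[b2 hb2 ->].
      move: hb1; rewrite !inE => /orP[] /eqP ->.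
        by rewrite eqxx !hc2 //; apply: e2.
      by rewrite nE !hc2 //; apply: e1.
    * exact: imset_f.
    * move=> B1 /imsetP[b1 hb1 ->]; rewrite nE.
      move: hb1; rewrite !inE => /orP[] /eqP ->.
        by rewrite eqxx !hc1.
      by rewrite nE.
    * by rewrite nE.
- by split; apply: imset_f.
- split.
  + move=> B1 B2 /imsetP[b1 hb1 ->] /imsetP[b2 hb2 ->].
    by rewrite !hs // hO; apply: hge.
  + by rewrite hs // hO ltr01.
- by rewrite !hs // hO divr1.
Qed.

Definition act5 n (O1 A1 O2 A2 F : {set 'I_n}) (a : label) :=
  if a == lO1 then O1 else if a == lE1 then A1 else if a == lO2 then O2
  else if a == lE2 then A2 else F.

Theorem theorem8 (R : realType) (w1 w2 : R) (ct : cost_type) (gt : game_type) :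
  0 <= w1 -> 0 <= w2 -> 0 < w1 + w2 ->
  lp_value w1 w2 ct gt = PoA_class w1 w2 ct gt.
Proof.
move=> _ _ _; rewrite /lp_value /PoA_class; congr ereal_sup.
rewrite eqEsubset; split => x.
  move=> [al [be [c1 [c2 [hf ->]]]]].
  have [n [alpha [beta [S1 [S2 [A1 [A2 [O1 [O2 [h1 h2 h3 h4 h5]]]]]]]]]] := A_main hf.
  by exists n, alpha, beta, S1, S2, A1, A2, O1, O2; split.
move=> [n [alpha [beta [S1 [S2 [A1 [A2 [O1 [O2 [hv heo [hO1 hO2] [hopt hK] ->]]]]]]]]]].
case: hv => hab [B1 hB1] [B2 hB2] hsym.
have main : forall F, (forall a, a \in labels1 gt -> act5 O1 A1 O2 A2 F a \in S1) ->
  (forall a, a \in labels2 gt -> act5 O1 A1 O2 A2 F a \in S2) ->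
  lp_eq_constraints gt (fun a1 a2 => cost1 ct w1 w2 alpha beta (act5 O1 A1 O2 A2 F a1) (act5 O1 A1 O2 A2 F a2))
                       (fun a1 a2 => cost2 ct w1 w2 alpha beta (act5 O1 A1 O2 A2 F a1) (act5 O1 A1 O2 A2 F a2)) ->
  exists al be c1 c2, lp_feasible w1 w2 ct gt al be c1 c2 /\
    (social_cost ct w1 w2 alpha beta A1 A2 / social_cost ct w1 w2 alpha beta O1 O2)%:E
      = (c1 lE1 lE2 + c2 lE1 lE2)%:E.
  move=> F h1 h2 he.
  exact: (B_main (act := act5 O1 A1 O2 A2 F) hab h1 h2 hopt hK he).
move: heo hsym main; rewrite /is_eq_outcome.
case: gt => [[hA1 hA2 e1 e2] _ main|[hA1 hA2 e1 e2] hsym main|[f [hfS hbr hA1 hp1 ->]] _ main].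
- have h1 : forall a, a \in labels1 Simultaneous -> act5 O1 A1 O2 A2 O2 a \in S1 by labcase.
  have h2 : forall a, a \in labels2 Simultaneous -> act5 O1 A1 O2 A2 O2 a \in S2 by labcase.
  edestruct (main O2 h1 h2) as [al [be [c1 [c2 [hf hx]]]]].
  + by split => a ha; [apply: e1; apply: h1 | apply: e2; apply: h2].
  + by exists al, be, c1, c2; split.
- subst S2.
  have h1 : forall a, a \in labels1 SymSimultaneous -> act5 O1 A1 O2 A2 O2 a \in S1 by labcase.
  have h2 : forall a, a \in labels2 SymSimultaneous -> act5 O1 A1 O2 A2 O2 a \in S1 by labcase.
  edestruct (main O2 h1 h2) as [al [be [c1 [c2 [hf hx]]]]].
  + by split => a ha; [apply: e1; apply: h1 | apply: e2; apply: h2].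
  + by exists al, be, c1, c2; split.
- have h1 : forall a, a \in labels1 Sequential -> act5 O1 A1 O2 (f A1) (f O1) a \in S1 by labcase.
  have h2 : forall a, a \in labels2 Sequential -> act5 O1 A1 O2 (f A1) (f O1) a \in S2.
    by labcase => *; rewrite /act5 /=; apply: hfS.
  edestruct (main (f O1) h1 h2) as [al [be [c1 [c2 [hf hx]]]]].
  + split.
    * by move=> a ha; apply: hbr => //; apply: h2.
    * by move=> a ha; apply: hbr => //; apply: h2.
    * exact: hp1.
  + by exists al, be, c1, c2; split.
Qed.
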